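(* For all $N\in\mathbb{N}$ and all $n\in\{0,1,\dots,N\}$ we have $\mathbf{1}_{\Omega^N_n}\|Y^N_n\|\le D^N_n$ pointwise on $\Omega$.
   Context: Standing setting: $T\in(0,\infty)$; $(\Omega,\mathcal{F},\mathbb{P})$ is a probability space with a normal filtration $(\mathcal{F}_t)_{t\in[0,T]}$; $d,m\in\mathbb{N}$; $W$ is an $m$-dimensional standard $(\mathcal{F}_t)$-Brownian motion; $\xi\colon\Omega\to\mathbb{R}^d$ is $\mathcal{F}_0$-measurable with $\mathbb{E}[\|\xi\|^p]<\infty$ for all $p\in[1,\infty)$. $\|\cdot\|$ is the Euclidean norm on vectors and the operator norm on matrices. $\mu\colon\mathbb{R}^d\to\mathbb{R}^d$ is $C^1$, $\sigma\colon\mathbb{R}^d\to\mathbb{R}^{d\times m}$, and there is $c\in(0,\infty)$ with $\|\mu'(x)\|\le c(1+\|x\|^c)$, $\|\sigma(x)-\sigma(y)\|\le c\|x-y\|$, $\langle x-y,\mu(x)-\mu(y)\rangle\le c\|x-y\|^2$ for all $x,y$. Let $\Delta W^N_n:=W_{(n+1)T/N}-W_{nT/N}$; tamed Euler scheme: $Y^N_0=\xi$, $Y^N_{n+1}=Y^N_n+\frac{(T/N)\mu(Y^N_n)}{1+(T/N)\|\mu(Y^N_n)\|}+\sigma(Y^N_n)\Delta W^N_n$ for $n\in\{0,\dots,N-1\}$. Let $\lambda:=(1+2c+T+\|\mu(0)\|+\|\sigma(0)\|)^4$, $\alpha^N_n:=\mathbf{1}_{\{\|Y^N_n\|\ge1\}}\big\langle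 \frac{Y^N_n}{\|Y^N_n\|},\frac{\sigma(Y^N_n)}{\|Y^N_n\|}\Delta W^N_n\big\rangle$ (defined as $0$ when $\|Y^N_n\|<1$), and $D^N_n:=(\lambda+\|\xi\|)\exp\big(\lambda+\sup_{u\in\{0,\dots,n\}}\sum_{k=u}^{n-1}[\lambda\|\Delta W^N_k\|^2+\alpha^N_k]\big)$ for $n\in\{0,\dots,N\}$ (empty sums are $0$). Let $\Omega^N_n:=\{\omega\in\Omega:\ \sup_{k\in\{0,\dots,n-1\}}D^N_k(\omega)\le N^{1/(2c)},\ \sup_{k\in\{0,\dots,n-1\}}\|\Delta W^N_k(\omega)\|\le1\}$, with $\Omega^N_0=\Omega$. *)

(* Defs.v *)
(* Stdlib reals (R), with MathComp's ordinals 'I_d (from boot) used only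
   as the index type of vectors/matrices, so that a vector in R^d is exactly a
   function 'I_d -> R (no junk coordinates). *)
From Stdlib Require Import Reals Lra ClassicalEpsilon.
From mathcomp Require Import all_boot.
Set Implicit Arguments. Unset Strict Implicit. Unset Printing Implicit Defensive.
Open Scope R_scope.

Definition Vec (d : nat) := 'I_d -> R.
Definition Mat (d m : nat) := 'I_d -> 'I_m -> R.

Definition vsum (d : nat) (f : 'I_d -> R) : R := foldr Rplus 0 (map f (enum 'I_d)).

Definition vadd d (u v : Vec d) : Vec d := fun i => u i + v i.
Definition vsub d (u v : Vec d) : Vec d := fun i => u i - v i.
Definition vscale d (a : R) (u : Vec d) : Vec d := fun i => a * u i.
Definition vzero d : Vec d := fun _ => 0.
Definition inner d (u v : Vec d) : R := vsum (fun i => u i * v i).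
Definition vnorm d (u : Vec d) : R := sqrt (inner u u).

Definition matvec d m (A : Mat d m) (v : Vec m) : Vec d :=
  fun i => vsum (fun j => A i j * v j).
Definition msub d m (A B : Mat d m) : Mat d m := fun i j => A i j - B i j.

Definition opnorm d m (A : Mat d m) : R :=
  epsilon (inhabits 0)
    (is_lub (fun r => exists v : Vec m, vnorm v <= 1 /\ r = vnorm (matvec A v))).

Definition rpow (x y : R) : R := if Rlt_dec 0 x then Rpower x y else 0.

Definition frechet d (f : Vec d -> Vec d) (x : Vec d) (L : Mat d d) : Prop :=
  forall eps, 0 < eps -> exists delta, 0 < delta /\
    forall h : Vec d, vnorm h < delta ->
      vnorm (vsub (vsub (f (vadd x h)) (f x)) (matvec L h)) <= eps * vnorm h.

Definition C1_with_deriv d (f : Vec d -> Vec d) (Df : Vec d -> Mat d d) : Prop :=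
  (forall x, frechet f x (Df x)) /\
  (forall x eps, 0 < eps -> exists delta, 0 < delta /\
     forall y, vnorm (vsub y x) < delta -> opnorm (msub (Df y) (Df x)) < eps).

(* sum_{k=u}^{n-1} g k  (0 if u >= n) *)
Definition sum_from_to (g : nat -> R) (u n : nat) : R :=
  foldr Rplus 0 (map g (iota u (n - u))).
Definition max_upto (f : nat -> R) (n : nat) : R :=
  foldr Rmax (f 0%N) (map f (iota 0 n.+1)).

Definition indicator (P : Prop) : R :=
  if excluded_middle_informative P then 1 else 0.

Section Scheme.
Variables (d m : nat) (mu : Vec d -> Vec d) (sigma : Vec d -> Mat d m)
          (T : R) (N : nat) (xi : Vec d) (dW : nat -> Vec m).

Fixpoint tamedY (n : nat) : Vec d :=
  match n with
  | 0 => xi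
  | n'.+1 =>
      let y := tamedY n' in
      let h := T / INR N in
      vadd (vadd y (vscale (h / (1 + h * vnorm (mu y))) (mu y)))
           (matvec (sigma y) (dW n'))
  end.
End Scheme.

Definition dW m (Omega : Type) (W : R -> Omega -> Vec m) (T : R) (N : nat)
  (omega : Omega) (k : nat) : Vec m :=
  vsub (W (INR k.+1 * T / INR N) omega) (W (INR k * T / INR N) omega).

Definition lam d m (mu : Vec d -> Vec d) (sigma : Vec d -> Mat d m) (c T : R) : R :=
  (1 + 2 * c + T + vnorm (mu (@vzero d)) + opnorm (sigma (@vzero d))) ^ 4.

Definition alphaN d m (sigma : Vec d -> Mat d m) (y : Vec d) (w : Vec m) : R :=
  if Rle_dec 1 (vnorm y) then
    inner (vscale (/ vnorm y) y) (vscale (/ vnorm y) (matvec (sigma y) w))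
  else 0.

Definition DN d m (mu : Vec d -> Vec d) (sigma : Vec d -> Mat d m) (c T : R)
  (N : nat) (xi : Vec d) (dw : nat -> Vec m) (n : nat) : R :=
  let l := lam mu sigma c T in
  let Y := tamedY mu sigma T N xi dw in
  (l + vnorm xi) *
  exp (l + max_upto (fun u => sum_from_to
          (fun k => l * vnorm (dw k) ^ 2 + alphaN sigma (Y k) (dw k)) u n) n).

(* omega \in Omega^N_n  (sup over the empty set condition is vacuous for n = 0) *)
Definition OmegaN d m (mu : Vec d -> Vec d) (sigma : Vec d -> Mat d m) (c T : R)
  (N : nat) (xi : Vec d) (dw : nat -> Vec m) (n : nat) : Prop :=
  (forall k, (k < n)%N -> DN mu sigma c T N xi dw k <= rpow (INR N) (/ (2 * c))) /\
  (forall k, (k < n)%N -> vnorm (dw k) <= 1).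

(* Main.v *)
Require Import Defs.
From Stdlib Require Import Reals Lra Psatz FunctionalExtensionality ClassicalEpsilon.
From mathcomp Require Import all_boot.
Set Implicit Arguments. Unset Strict Implicit.
Open Scope R_scope.


Definition lsum {A : Type} (f : A -> R) (l : seq A) := foldr Rplus 0 (map f l).

Lemma lsum_ext {A} (f g : A -> R) l : (forall i, f i = g i) -> lsum f l = lsum g l.
Proof. intro H; induction l as [|x l IH]; simpl; [reflexivity|]. unfold lsum in *; simpl; rewrite IH H; reflexivity. Qed.
Lemma lsum_add {A} (f g : A -> R) l : lsum (fun i => f i + g i) l = lsum f l + lsum g l.
Proof. induction l as [|x l IH]; unfold lsum in *; simpl; [lra|]. rewrite IH; ring. Qed.
Lemma lsum_scale {A} (f : A -> R) k l : lsum (fun i => k * f i) l = k * lsum f l.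
Proof. induction l as [|x l IH]; unfold lsum in *; simpl; [ring|]. rewrite IH; ring. Qed.
Lemma lsum_nonneg {A} (f : A -> R) l : (forall i, 0 <= f i) -> 0 <= lsum f l.
Proof. intro H; induction l as [|x l IH]; unfold lsum in *; simpl; [lra|]. specialize (H x); lra. Qed.
Lemma lsum_le {A} (f g : A -> R) l : (forall i, f i <= g i) -> lsum f l <= lsum g l.
Proof. intro H; induction l as [|x l IH]; unfold lsum in *; simpl; [lra|]. specialize (H x); lra. Qed.

Lemma vsum_lsum d (f : 'I_d -> R) : vsum f = lsum f (enum 'I_d).
Proof. reflexivity. Qed.

Section V.
Variable d : nat.
Implicit Types u v w : Vec d.

Lemma inner_nonneg u : 0 <= inner u u.
Proof. unfold inner; rewrite vsum_lsum; apply lsum_nonneg; intro i; nra. Qed.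
Lemma vnorm_nonneg u : 0 <= vnorm u.
Proof. apply sqrt_pos. Qed.
Lemma vnorm_sq u : vnorm u ^ 2 = inner u u.
Proof. unfold vnorm; rewrite pow2_sqrt; [reflexivity|apply inner_nonneg]. Qed.
Lemma inner_sym u v : inner u v = inner v u.
Proof. unfold inner; rewrite !vsum_lsum; apply lsum_ext; intro; ring. Qed.

Lemma inner_lin u1 u2 a b v : inner (fun i => a * u1 i + b * u2 i) v = a * inner u1 v + b * inner u2 v.
Proof. unfold inner; rewrite !vsum_lsum -!lsum_scale -lsum_add. apply lsum_ext; intro; ring. Qed.

Lemma inner_add_l u1 u2 v : inner (vadd u1 u2) v = inner u1 v + inner u2 v.
Proof. rewrite -(Rmult_1_l (inner u1 v)) -(Rmult_1_l (inner u2 v)) -inner_lin.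
 unfold inner; rewrite !vsum_lsum; apply lsum_ext; intro; unfold vadd; ring. Qed.
Lemma inner_sub_l u1 u2 v : inner (vsub u1 u2) v = inner u1 v - inner u2 v.
Proof. replace (inner u1 v - inner u2 v) with (1 * inner u1 v + (-1) * inner u2 v) by ring. rewrite -inner_lin.
 unfold inner; rewrite !vsum_lsum; apply lsum_ext; intro; unfold vsub; ring. Qed.
Lemma inner_scale_l k u v : inner (vscale k u) v = k * inner u v.
Proof. unfold inner; rewrite !vsum_lsum -lsum_scale; apply lsum_ext; intro; unfold vscale; ring. Qed.
Lemma inner_add_r u v1 v2 : inner u (vadd v1 v2) = inner u v1 + inner u v2.
Proof. rewrite !(inner_sym u); apply inner_add_l. Qed.
Lemma inner_sub_r u v1 v2 : inner u (vsub v1 v2) = inner u v1 - inner u v2.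
Proof. rewrite !(inner_sym u); apply inner_sub_l. Qed.
Lemma inner_scale_r k u v : inner u (vscale k v) = k * inner u v.
Proof. rewrite !(inner_sym u); apply inner_scale_l. Qed.

Lemma CS u v : inner u v ^ 2 <= inner u u * inner v v.
Proof.
 assert (Q : forall t, 0 <= inner u u - 2 * t * inner u v + t^2 * inner v v).
 { intro t. pose proof (inner_nonneg (vsub u (vscale t v))) as H.
   rewrite inner_sub_l !inner_sub_r !inner_scale_l !inner_scale_r (inner_sym v u) in H. nra. }
 pose proof (inner_nonneg u); pose proof (inner_nonneg v).
 destruct (Req_dec (inner v v) 0) as [E|E].
 - destruct (Req_dec (inner u v) 0) as [E2|E2].
   + rewrite E2 E; nra.
   + specialize (Q ((inner u u + 1) / (2 * inner u v))). rewrite E in Q.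
     replace (2 * ((inner u u + 1) / (2 * inner u v)) * inner u v) with (inner u u + 1) in Q by (field; auto). nra.
 - specialize (Q (inner u v / inner v v)).
   replace (inner u u - 2 * (inner u v / inner v v) * inner u v + (inner u v / inner v v) ^ 2 * inner v v)
     with ((inner u u * inner v v - inner u v ^ 2) / inner v v) in Q by (field; auto).
   assert (0 < inner v v) by lra.
   assert (0 <= inner u u * inner v v - inner u v ^ 2); [|lra].
   apply (Rmult_le_reg_r (/ inner v v)); [apply Rinv_0_lt_compat; lra|]. rewrite Rmult_0_l. exact Q.
Qed.

Lemma sq_le_abs x y : 0 <= y -> x ^ 2 <= y ^ 2 -> Rabs x <= y.
Proof. intros. unfold Rabs; destruct Rcase_abs; nra. Qed.

Lemma CS_abs u v : Rabs (inner u v) <= vnorm u * vnorm v.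
Proof. apply sq_le_abs. pose proof (vnorm_nonneg u); pose proof (vnorm_nonneg v); nra.
 rewrite Rpow_mult_distr !vnorm_sq. apply CS. Qed.
Lemma CS_le u v : inner u v <= vnorm u * vnorm v.
Proof. pose proof (CS_abs u v). pose proof (Rle_abs (inner u v)). lra. Qed.

Lemma vnorm_le_sq u y : 0 <= y -> inner u u <= y ^ 2 -> vnorm u <= y.
Proof. intros. unfold vnorm. rewrite -(sqrt_pow2 y H). apply sqrt_le_1; auto. apply inner_nonneg. apply pow2_ge_0. Qed.

Lemma vnorm_scale k u : vnorm (vscale k u) = Rabs k * vnorm u.
Proof. unfold vnorm. rewrite inner_scale_l inner_scale_r -Rmult_assoc sqrt_mult.
 - replace (k * k) with (Rsqr k) by reflexivity. rewrite sqrt_Rsqr_abs; reflexivity.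
 - apply Rle_0_sqr.
 - apply inner_nonneg. Qed.

Lemma vnorm_add u v : vnorm (vadd u v) <= vnorm u + vnorm v.
Proof. apply vnorm_le_sq. pose proof (vnorm_nonneg u); pose proof (vnorm_nonneg v); lra.
 rewrite inner_add_l !inner_add_r (inner_sym v u).
 pose proof (CS_le u v). pose proof (vnorm_sq u); pose proof (vnorm_sq v). nra. Qed.

Lemma vadd_sub_cancel u v : vadd (vsub u v) v = u.
Proof. apply functional_extensionality; intro; unfold vadd, vsub; ring. Qed.
Lemma vsub_zero u : vsub u (@vzero d) = u.
Proof. apply functional_extensionality; intro; unfold vsub, vzero; ring. Qed.

Lemma vnorm_tri_sub u v : vnorm u <= vnorm (vsub u v) + vnorm v.
Proof. rewrite -{1}(vadd_sub_cancel u v). apply vnorm_add. Qed.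

End V.

Lemma lsum_zero {A} (l : seq A) : lsum (fun _ => 0) l = 0.
Proof. induction l as [|x l IH]; unfold lsum in *; simpl; [reflexivity|]. rewrite IH; ring. Qed.
Lemma vnorm_zero d : vnorm (@vzero d) = 0.
Proof. unfold vnorm, inner. rewrite vsum_lsum.
 rewrite (@lsum_ext _ _ (fun _ => 0)). rewrite lsum_zero sqrt_0 //. intro; unfold vzero; ring. Qed.


Section M.
Variables d m : nat.
Implicit Types A B : Mat d m.

Lemma matvec_scale A k v : matvec A (vscale k v) = vscale k (matvec A v).
Proof. apply functional_extensionality => i. exact (inner_scale_r k (A i) v). Qed.
Lemma matvec_msub A B v : matvec (msub A B) v = vsub (matvec A v) (matvec B v).
Proof. apply functional_extensionality => i. exact (inner_sub_l (A i) (B i) v). Qed.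

Definition frob A := vsum (fun i => inner (A i) (A i)).

Lemma frob_bound A v : vnorm (matvec A v) <= sqrt (frob A) * vnorm v.
Proof.
 apply vnorm_le_sq. apply Rmult_le_pos; [apply sqrt_pos|apply vnorm_nonneg].
 rewrite Rpow_mult_distr pow2_sqrt. 2: unfold frob; rewrite vsum_lsum; apply lsum_nonneg => i; apply inner_nonneg.
 rewrite vnorm_sq.
 change (inner (matvec A v) (matvec A v)) with (lsum (fun i => matvec A v i * matvec A v i) (enum 'I_d)).
 unfold frob; rewrite vsum_lsum Rmult_comm -lsum_scale.
 apply lsum_le => i. unfold matvec. pose proof (CS (A i) v). simpl in H.
 change (vsum (fun j => A i j * v j)) with (inner (A i) v). nra.
Qed.

Definition opset A := fun r => exists v : Vec m, vnorm v <= 1 /\ r = vnorm (matvec A v).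

Lemma opnorm_lub A : is_lub (opset A) (opnorm A).
Proof.
 unfold opnorm. apply epsilon_spec.
 destruct (completeness (opset A)) as [x Hx].
 - exists (sqrt (frob A)). intros r [v [Hv ->]]. pose proof (frob_bound A v).
   pose proof (sqrt_pos (frob A)). nra.
 - exists (vnorm (matvec A (@vzero m))). exists (@vzero m). split; [|reflexivity].
   rewrite vnorm_zero; lra.
 - exists x; exact Hx.
Qed.

Lemma opnorm_ub A v : vnorm v <= 1 -> vnorm (matvec A v) <= opnorm A.
Proof. intro H. apply (proj1 (opnorm_lub A)). exists v; split; auto. Qed.

Lemma opnorm_nonneg A : 0 <= opnorm A.
Proof. pose proof (vnorm_nonneg (matvec A (@vzero m))). pose proof (opnorm_ub A (v:=@vzero m)).
 assert (vnorm (@vzero m) <= 1).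
 { rewrite vnorm_zero; lra. }
 lra. Qed.

Lemma opnorm_bound A v : vnorm (matvec A v) <= opnorm A * vnorm v.
Proof.
 pose proof (vnorm_nonneg v) as Hv0. pose proof (opnorm_nonneg A).
 destruct (Req_dec (vnorm v) 0) as [E|E].
 - pose proof (frob_bound A v). rewrite E in H0 |- *. pose proof (vnorm_nonneg (matvec A v)). lra.
 - assert (Hp : 0 < vnorm v) by lra.
   pose proof (opnorm_ub A (v:=vscale (/ vnorm v) v)) as H1.
   rewrite matvec_scale !vnorm_scale Rabs_right in H1.
   2: { apply Rle_ge, Rlt_le, Rinv_0_lt_compat; auto. }
   rewrite Rinv_l in H1; auto.
   apply (Rmult_le_reg_l (/ vnorm v)). apply Rinv_0_lt_compat; auto.
   replace (/ vnorm v * (opnorm A * vnorm v)) with (opnorm A) by (field; auto). apply H1; lra.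
Qed.
End M.


Lemma rpow_nonneg x y : 0 <= rpow x y.
Proof. unfold rpow; destruct (Rlt_dec 0 x); simpl; [unfold Rpower; left; apply exp_pos|lra]. Qed.
Lemma rpow_mono x K c : 0 <= x <= K -> 0 <= c -> rpow x c <= rpow K c.
Proof. intros [H1 H2] Hc. unfold rpow. destruct (Rlt_dec 0 x) as [Hx|Hx]; simpl.
 destruct (Rlt_dec 0 K) as [HK|HK]; simpl; [|lra]. apply Rle_Rpower_l; lra.
 destruct (Rlt_dec 0 K); simpl; [unfold Rpower; left; apply exp_pos|lra]. Qed.
Lemma rpow_one c : rpow 1 c = 1.
Proof. unfold rpow. destruct (Rlt_dec 0 1); simpl; [|lra]. unfold Rpower. rewrite ln_1 Rmult_0_r exp_0 //. Qed.
Lemma rpow_root N c : 0 < N -> 0 < c -> rpow (rpow N (/ (2 * c))) c = sqrt N.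
Proof. intros HN Hc. unfold rpow at 2. destruct (Rlt_dec 0 N) as [H0|H0]; simpl; [|lra].
 unfold rpow. destruct (Rlt_dec 0 (Rpower N (/ (2 * c)))) as [H1|H]; simpl; [|exfalso; apply H; unfold Rpower; apply exp_pos].
 rewrite Rpower_mult. replace (/ (2 * c) * c) with (/ 2) by (field; lra). apply Rpower_sqrt; auto. Qed.

Section MuBound.
Variables (d : nat) (mu : Vec d -> Vec d) (Dmu : Vec d -> Mat d d).

Lemma vscale_add t h (y : Vec d) : vadd (vscale t y) (vscale h y) = vscale (t + h) y.
Proof. apply functional_extensionality => i; unfold vadd, vscale; ring. Qed.
Lemma vscale_1 (y : Vec d) : vscale 1 y = y.
Proof. apply functional_extensionality => i; unfold vscale; ring. Qed.
Lemma vscale_0 (y : Vec d) : vscale 0 y = @vzero d.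
Proof. apply functional_extensionality => i; unfold vscale, vzero; ring. Qed.

Lemma deriv_g (e y : Vec d) t :
  frechet mu (vscale t y) (Dmu (vscale t y)) ->
  derivable_pt_lim (fun s => inner e (mu (vscale s y))) t (inner e (matvec (Dmu (vscale t y)) y)).
Proof.
 intros Hfr eps Heps.
 pose proof (vnorm_nonneg e) as He. pose proof (vnorm_nonneg y) as Hy.
 set (K := (vnorm e + 1) * (vnorm y + 1)).
 assert (HK : 0 < K) by (unfold K; nra).
 destruct (Hfr (eps / (2 * K))) as [dl [Hdl Hf]].
 { apply Rdiv_lt_0_compat; lra. }
 assert (Hpos : 0 < dl / (vnorm y + 1)) by (apply Rdiv_lt_0_compat; lra).
 exists (mkposreal _ Hpos). intros h Hh0 Hh. simpl in Hh.
 specialize (Hf (vscale h y)).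
 rewrite vnorm_scale vscale_add in Hf.
 pose proof (Rabs_pos h) as Hah. assert (Hah' : 0 < Rabs h) by (apply Rabs_pos_lt; auto).
 assert (Hlt : Rabs h * vnorm y < dl).
 { apply (Rmult_lt_compat_r (vnorm y + 1)) in Hh; [|lra].
   replace (dl / (vnorm y + 1) * (vnorm y + 1)) with dl in Hh by (field; lra). nra. }
 specialize (Hf Hlt).
 set (Rv := vsub (vsub (mu (vscale (t + h) y)) (mu (vscale t y))) (matvec (Dmu (vscale t y)) (vscale h y))) in Hf.
 assert (Heq : inner e (mu (vscale (t + h) y)) - inner e (mu (vscale t y)) = inner e Rv + h * inner e (matvec (Dmu (vscale t y)) y)).
 { unfold Rv. rewrite !inner_sub_r matvec_scale inner_scale_r. ring. }
 rewrite Heq.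
 replace ((inner e Rv + h * inner e (matvec (Dmu (vscale t y)) y)) / h - inner e (matvec (Dmu (vscale t y)) y))
   with (inner e Rv * / h) by (field; auto).
 rewrite Rabs_mult Rabs_inv.
 pose proof (CS_abs e Rv) as HC.
 assert (HB : Rabs (inner e Rv) <= vnorm e * (eps / (2 * K) * (Rabs h * vnorm y))).
 { apply (Rle_trans _ _ _ HC). apply Rmult_le_compat_l; auto. }
 apply (Rmult_lt_reg_r (Rabs h)); auto.
 rewrite Rmult_assoc Rinv_l; [|lra]. rewrite Rmult_1_r.
 apply (Rle_lt_trans _ _ _ HB).
 assert (vnorm e * vnorm y <= K) by (unfold K; nra).
 assert (HqK : eps / (2 * K) * K = eps / 2) by (field; lra).
 assert (0 < eps / (2*K)) by (apply Rdiv_lt_0_compat; lra).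
 set (q := eps / (2 * K)) in *.
 replace (vnorm e * (q * (Rabs h * vnorm y))) with ((q * Rabs h) * (vnorm e * vnorm y)) by ring.
 apply (Rle_lt_trans _ ((q * Rabs h) * K)). apply Rmult_le_compat_l; [nra|auto].
 replace (q * Rabs h * K) with ((q * K) * Rabs h) by ring. rewrite HqK. nra.
Qed.

Lemma mu_bound c :
  C1_with_deriv mu Dmu -> 0 < c ->
  (forall x, opnorm (Dmu x) <= c * (1 + rpow (vnorm x) c)) ->
  forall y, vnorm (vsub (mu y) (mu (@vzero d))) <= c * (1 + rpow (vnorm y) c) * vnorm y.
Proof.
 intros [Hfr _] Hc HD y.
 set (e := vsub (mu y) (mu (@vzero d))).
 destruct (MVT_cor2 (fun s => inner e (mu (vscale s y))) (fun s => inner e (matvec (Dmu (vscale s y)) y)) 0 1 Rlt_0_1)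
   as [t [Ht Ht01]].
 { intros s _. apply deriv_g. apply Hfr. }
 simpl in Ht. rewrite vscale_1 vscale_0 in Ht.
 rewrite -inner_sub_r in Ht. fold e in Ht.
 rewrite -vnorm_sq in Ht.
 pose proof (CS_le e (matvec (Dmu (vscale t y)) y)) as H1.
 pose proof (opnorm_bound (Dmu (vscale t y)) y) as H2.
 pose proof (HD (vscale t y)) as H3.
 rewrite vnorm_scale Rabs_right in H3; [|lra].
 pose proof (vnorm_nonneg y) as Hy. pose proof (vnorm_nonneg e) as He.
 assert (H4 : rpow (t * vnorm y) c <= rpow (vnorm y) c) by (apply rpow_mono; nra).
 pose proof (opnorm_nonneg (Dmu (vscale t y))).
 pose proof (rpow_nonneg (vnorm y) c).
 set (X := c * (1 + rpow (vnorm y) c) * vnorm y) in *.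
 assert (HX : vnorm (matvec (Dmu (vscale t y)) y) <= X).
 { unfold X. apply (Rle_trans _ _ _ H2). apply Rmult_le_compat_r; auto. nra. }
 assert (0 <= X) by (unfold X; apply Rmult_le_pos; [apply Rmult_le_pos|]; lra).
 assert (vnorm e ^ 2 <= vnorm e * X) by nra.
 destruct (Req_dec (vnorm e) 0) as [E|E]; [rewrite E; lra|nra].
Qed.
End MuBound.


Lemma pP T a b c : 0 <= T -> 0 <= a -> 0 <= b -> 0 <= c ->
  T*(a+2*c) <= (1+2*c+T+a+b)^2/4.
Proof. intros. assert (0 <= T + (a+2*c)) by lra. assert (T + (a+2*c) <= 1+2*c+T+a+b) by lra.
assert (4*(T*(a+2*c)) <= (T+(a+2*c))^2) by (pose proof (pow2_ge_0 (T-(a+2*c))); nra).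
assert ((T+(a+2*c))^2 <= (1+2*c+T+a+b)^2) by (apply pow_incr; lra). lra. Qed.
Lemma p1 T a b c : 0 <= T -> 0 <= a -> 0 <= b -> 0 <= c ->
  T^2*(a+2*c)^2 + 2*T*(c+a) + T*(a+2*c)*(b+c) <= (1+2*c+T+a+b)^4.
Proof. intros. pose proof (pP H H0 H1 H2). set (L:=1+2*c+T+a+b) in *. set (P := T*(a+2*c)) in *.
assert (HP: 0 <= P) by (unfold P; nra).
assert (HL: 1 <= L) by (unfold L; lra).
assert (b + c <= L) by (unfold L; lra).
assert (T*(c+a) <= P) by (unfold P; nra).
assert (P*(b+c) <= L^2/4*L) by nra.
replace (T^2*(a+2*c)^2) with (P*P) by (unfold P; ring).
replace (T*(a+2*c)*(b+c)) with (P*(b+c)) by (unfold P; ring).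
assert (P*P <= L^2/4 * (L^2/4)) by nra.
assert (L^2 <= L^3) by nra. assert (L^3 <= L^4) by nra.
nra. Qed.
Lemma p2 T a b c : 0 <= T -> 0 <= a -> 0 <= b -> 0 <= c ->
  (b+c)^2 + T*(a+2*c)*(b+c) <= 2*(1+2*c+T+a+b)^4.
Proof. intros. pose proof (pP H H0 H1 H2). set (L:=1+2*c+T+a+b) in *. set (P := T*(a+2*c)) in *.
assert (HP: 0 <= P) by (unfold P; nra).
assert (HL: 1 <= L) by (unfold L; lra).
assert (b + c <= L) by (unfold L; lra).
replace (T*(a+2*c)*(b+c)) with (P*(b+c)) by (unfold P; ring).
assert (P*(b+c) <= L^2/4*L) by nra.
assert ((b+c)^2 <= L^2) by nra.
assert (L^2 <= L^3) by nra. assert (L^3 <= L^4) by nra. nra. Qed.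
Lemma p3 T a b c : 0 <= T -> 0 <= a -> 0 <= b -> 0 <= c ->
  1 + T*(a+2*c) + b + c <= (1+2*c+T+a+b)^4.
Proof. intros. assert (0 <= T + (a+2*c)) by lra.
assert (4*(T*(a+2*c)) <= (T+(a+2*c))^2) by (pose proof (pow2_ge_0 (T-(a+2*c))); nra).
set (x := 2*c+T+a+b). assert (0 <= x) by (unfold x; lra).
assert ((T+(a+2*c))^2 <= x^2) by (apply pow_incr; unfold x; lra).
replace (1+2*c+T+a+b) with (1+x) by (unfold x; ring).
assert (b + c <= x) by (unfold x; lra).
assert (0 <= x^3) by (apply pow_le; lra). assert (0 <= x^4) by (apply pow_le; lra).
nra. Qed.

Lemma expand d (y mm s : Vec d) p :
  inner (vadd (vadd y (vscale p mm)) s) (vadd (vadd y (vscale p mm)) s) =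
  inner y y + p^2 * inner mm mm + inner s s + 2 * p * inner y mm + 2 * inner y s + 2 * p * inner mm s.
Proof. rewrite !inner_add_l !inner_add_r !inner_scale_l !inner_scale_r.
 rewrite (inner_sym mm y) (inner_sym s y) (inner_sym s mm). ring. Qed.

Section Step.
Variables (d m : nat) (mu : Vec d -> Vec d) (sigma : Vec d -> Mat d m) (T c : R) (N : nat).
Hypothesis HT : 0 < T.
Hypothesis Hc : 0 < c.
Hypothesis HN : (0 < N)%N.
Hypothesis HmuB : forall y, vnorm (vsub (mu y) (mu (@vzero d))) <= c * (1 + rpow (vnorm y) c) * vnorm y.
Hypothesis Hsig : forall x y, opnorm (msub (sigma x) (sigma y)) <= c * vnorm (vsub x y).
Hypothesis Hone : forall x y, inner (vsub x y) (vsub (mu x) (mu y)) <= c * vnorm (vsub x y) ^ 2.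

Let a := vnorm (mu (@vzero d)).
Let b := opnorm (sigma (@vzero d)).

Definition step (y : Vec d) (w : Vec m) : Vec d :=
  let h := T / INR N in
  vadd (vadd y (vscale (h / (1 + h * vnorm (mu y))) (mu y))) (matvec (sigma y) w).

Lemma lam_eq : lam mu sigma c T = (1 + 2*c + T + a + b) ^ 4.
Proof. reflexivity. Qed.

Lemma INR_N_ge1 : 1 <= INR N.
Proof. apply (le_INR 1). apply/leP. exact HN. Qed.

Lemma sig_bound y w : vnorm (matvec (sigma y) w) <= (b + c * vnorm y) * vnorm w.
Proof.
 pose proof (vnorm_tri_sub (matvec (sigma y) w) (matvec (sigma (@vzero d)) w)) as H.
 rewrite -matvec_msub in H.
 pose proof (opnorm_bound (msub (sigma y) (sigma (@vzero d))) w) as H1.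
 pose proof (opnorm_bound (sigma (@vzero d)) w) as H2.
 pose proof (Hsig y (@vzero d)) as H3. rewrite vsub_zero in H3.
 pose proof (vnorm_nonneg w). fold b in H2. nra.
Qed.

Lemma mu_le y : vnorm (mu y) <= a + c * (1 + rpow (vnorm y) c) * vnorm y.
Proof. pose proof (vnorm_tri_sub (mu y) (mu (@vzero d))). pose proof (HmuB y). unfold a; lra. Qed.

Lemma pM_le y : let h := T / INR N in
  0 <= h / (1 + h * vnorm (mu y)) <= h /\
  h / (1 + h * vnorm (mu y)) * vnorm (mu y) <= h * vnorm (mu y).
Proof.
 intro h. pose proof INR_N_ge1. assert (Hh : 0 < h) by (unfold h; apply Rdiv_lt_0_compat; lra).
 pose proof (vnorm_nonneg (mu y)) as HM.
 assert (0 < 1 + h * vnorm (mu y)) by nra.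
 assert (h / (1 + h * vnorm (mu y)) <= h).
 { unfold Rdiv. apply (Rmult_le_reg_r (1 + h * vnorm (mu y))); auto.
   rewrite Rmult_assoc Rinv_l; [|lra]. nra. }
 assert (0 <= h / (1 + h * vnorm (mu y))) by (apply Rlt_le, Rdiv_lt_0_compat; lra).
 split; [split; auto|]. nra.
Qed.

Lemma step_small y w : vnorm y < 1 -> vnorm w <= 1 -> vnorm (step y w) <= lam mu sigma c T.
Proof.
 intros Hy Hw. unfold step. set (h := T / INR N).
 pose proof (pM_le y) as [[Hp0 Hp1] HpM]. fold h in Hp0, Hp1, HpM.
 set (p := h / (1 + h * vnorm (mu y))) in *.
 pose proof (vnorm_add (vadd y (vscale p (mu y))) (matvec (sigma y) w)) as H1.
 pose proof (vnorm_add y (vscale p (mu y))) as H2.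
 rewrite vnorm_scale Rabs_right in H2; [|lra].
 pose proof (sig_bound y w) as H3.
 pose proof (mu_le y) as H4.
 pose proof (vnorm_nonneg y) as Hy0. pose proof (vnorm_nonneg w) as Hw0.
 assert (Hr : rpow (vnorm y) c <= 1) by (rewrite -(rpow_one c); apply rpow_mono; lra).
 pose proof (rpow_nonneg (vnorm y) c).
 pose proof (vnorm_nonneg (mu y)) as HM.
 assert (Hq : (1 + rpow (vnorm y) c) * vnorm y <= 2) by nra.
 assert (HM2 : vnorm (mu y) <= a + 2 * c) by (rewrite Rmult_assoc in H4; nra).
 pose proof INR_N_ge1.
 assert (Hh : h <= T).
 { unfold h, Rdiv. apply (Rmult_le_reg_r (INR N)); [lra|]. rewrite Rmult_assoc Rinv_l; [|lra]. nra. }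
 assert (Hh0 : 0 <= h) by (unfold h; apply Rlt_le, Rdiv_lt_0_compat; lra).
 pose proof (vnorm_nonneg (mu (@vzero d))) as Ha. fold a in Ha.
 pose proof (opnorm_nonneg (sigma (@vzero d))) as Hb. fold b in Hb.
 assert (h * vnorm (mu y) <= T * (a + 2 * c)) by nra.
 assert (0 <= b + c * vnorm y) by nra.
 assert ((b + c * vnorm y) * vnorm w <= b + c * vnorm y) by nra.
 assert (vnorm (matvec (sigma y) w) <= b + c) by nra.
 pose proof (p3 (Rlt_le _ _ HT) Ha Hb (Rlt_le _ _ Hc)).
 rewrite lam_eq. lra.
Qed.

Lemma step_large y w : 1 <= vnorm y -> rpow (vnorm y) c <= sqrt (INR N) ->
  vnorm (step y w) <= vnorm y *
    exp (lam mu sigma c T / (2 * INR N) + lam mu sigma c T * vnorm w ^ 2 + alphaN sigma y w).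
Proof.
 intros Hy Hrp. unfold step. set (h := T / INR N).
 pose proof (pM_le y) as [[Hp0 Hp1] HpM]. fold h in Hp0, Hp1, HpM.
 set (p := h / (1 + h * vnorm (mu y))) in *.
 set (r := vnorm y) in *. set (W := vnorm w). set (M := vnorm (mu y)) in *.
 set (s := matvec (sigma y) w).
 set (lm := lam mu sigma c T).
 pose proof INR_N_ge1 as HN1.
 set (sN := sqrt (INR N)) in *.
 assert (HsN1 : 1 <= sN) by (unfold sN; rewrite -sqrt_1; apply sqrt_le_1; lra).
 assert (HsN2 : sN * sN = INR N) by (unfold sN; apply sqrt_sqrt; lra).
 set (q := / sN).
 assert (Hq0 : 0 < q) by (unfold q; apply Rinv_0_lt_compat; lra).
 assert (HqsN : q * sN = 1) by (unfold q; field; lra).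
 assert (Hq1 : q <= 1) by nra.
 assert (Hhq : h = T * q ^ 2).
 { unfold h, q. rewrite -HsN2. field. lra. }
 assert (Hq2 : q ^ 2 = / INR N). { unfold q. rewrite -HsN2. field. lra. }
 pose proof (vnorm_nonneg w) as HW. fold W in HW.
 pose proof (vnorm_nonneg (mu y)) as HM. fold M in HM.
 pose proof (vnorm_nonneg (mu (@vzero d))) as Ha. fold a in Ha.
 pose proof (opnorm_nonneg (sigma (@vzero d))) as Hb. fold b in Hb.
 assert (Halpha : inner y s = r ^ 2 * alphaN sigma y w).
 { unfold alphaN. destruct (Rle_dec 1 (vnorm y)) as [H1|H1]; simpl; [|exfalso; apply H1; exact Hy].
   fold r. fold s. rewrite inner_scale_l inner_scale_r. field. lra. }
 set (al := alphaN sigma y w) in *.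
 pose proof (mu_le y) as HMle. fold r M in HMle.
 assert (c * r * rpow r c <= c * r * sN) by (apply Rmult_le_compat_l; nra).
 assert (HM2 : M <= a + c * r + c * sN * r) by nra.
 set (G := T * (a + 2 * c)).
 assert (HhM : h * M <= G * r * q).
 { rewrite Hhq. unfold G.
   assert (q ^ 2 * M <= q ^ 2 * (a + c * r + c * sN * r)) by (apply Rmult_le_compat_l; [nra|auto]).
   assert (E1 : q ^ 2 * (c * sN * r) = q * c * r) by (replace (q ^ 2 * (c * sN * r)) with ((q * sN) * (q * c * r)) by ring; rewrite HqsN; ring).
   assert (Hqq : q ^ 2 <= q) by nra.
   assert (q * a <= q * a * r) by (pose proof (Rmult_le_pos q a ltac:(lra) Ha); nra).
   assert (q ^ 2 * a <= q * a) by (apply Rmult_le_compat_r; auto).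
   assert (q ^ 2 * (c * r) <= q * (c * r)) by (apply Rmult_le_compat_r; nra).
   assert (T * (q ^ 2 * M) <= T * (q ^ 2 * (a + c * r + c * sN * r))) by (apply Rmult_le_compat_l; lra).
   nra. }
 assert (HpMG : p * M <= G * r * q) by lra.
 assert (Hyy : inner y y = r ^ 2) by (unfold r; rewrite vnorm_sq; reflexivity).
 assert (Hymu : inner y (mu y) <= c * r ^ 2 + a * r).
 { pose proof (Hone y (@vzero d)) as H1. rewrite !vsub_zero inner_sub_r in H1.
   pose proof (CS_le y (mu (@vzero d))). unfold r, a; lra. }
 pose proof (sig_bound y w) as Hs. fold s r W in Hs.
 set (Z := b + c).
 assert (b + c * r <= Z * r) by (unfold Z; nra).
 assert ((b + c * r) * W <= Z * r * W) by (apply Rmult_le_compat_r; auto).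
 assert (Hs2 : vnorm s <= Z * r * W) by (unfold r, W, s in *; lra).
 pose proof (vnorm_nonneg s) as Hs0.
 assert (Hss : inner s s <= (Z * r * W) ^ 2) by (rewrite -vnorm_sq; apply pow_incr; lra).
 assert (Hms : inner (mu y) s <= M * vnorm s) by (apply CS_le).
 assert (Hmm : inner (mu y) (mu y) = M ^ 2) by (unfold M; rewrite vnorm_sq; reflexivity).
 assert (HG0 : 0 <= G) by (unfold G; nra).
 assert (HZ0 : 0 <= Z) by (unfold Z; lra).
 assert (T1 : p ^ 2 * M ^ 2 <= G ^ 2 * r ^ 2 * q ^ 2).
 { replace (p ^ 2 * M ^ 2) with ((p * M) ^ 2) by ring.
   replace (G ^ 2 * r ^ 2 * q ^ 2) with ((G * r * q) ^ 2) by ring. apply pow_incr; nra. }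
 assert (T2 : 2 * p * inner y (mu y) <= 2 * T * (c + a) * q ^ 2 * r ^ 2).
 { assert (0 <= c * r ^ 2 + a * r) by nra.
   assert (p * inner y (mu y) <= p * (c * r ^ 2 + a * r)) by (apply Rmult_le_compat_l; auto).
   assert (K1 : p * (c * r ^ 2 + a * r) <= h * (c * r ^ 2 + a * r)) by (apply Rmult_le_compat_r; auto).
   assert (K2 : a * r <= a * r ^ 2) by (pose proof (Rmult_le_pos (a * r) (r - 1) ltac:(nra) ltac:(lra)); nra).
   assert (K3 : h * (c * r ^ 2 + a * r) <= h * (c * r ^ 2 + a * r ^ 2)) by (apply Rmult_le_compat_l; [unfold h; apply Rlt_le, Rdiv_lt_0_compat; lra|lra]).
   rewrite Hhq in K1 K3. nra. }
 assert (T4 : 2 * p * inner (mu y) s <= G * Z * r ^ 2 * (q ^ 2 + W ^ 2)).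
 { assert (p * inner (mu y) s <= p * (M * vnorm s)) by (apply Rmult_le_compat_l; auto).
   assert (p * M * vnorm s <= G * r * q * (Z * r * W)).
   { apply Rmult_le_compat; nra. }
   assert (2 * q * W <= q ^ 2 + W ^ 2) by (pose proof (pow2_ge_0 (q - W)); nra).
   assert (0 <= G * Z * r ^ 2) by (apply Rmult_le_pos; nra).
   nra. }
 pose proof (p1 (Rlt_le _ _ HT) Ha Hb (Rlt_le _ _ Hc)) as P1.
 pose proof (p2 (Rlt_le _ _ HT) Ha Hb (Rlt_le _ _ Hc)) as P2.
 fold Z in P2. replace (T * (a + 2 * c)) with G in P1, P2 by reflexivity.
 replace (T ^ 2 * (a + 2 * c) ^ 2) with (G ^ 2) in P1 by (unfold G; ring).
 assert (Hlm : lm = (1 + 2 * c + T + a + b) ^ 4) by reflexivity.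
 rewrite -Hlm in P1 P2.
 assert (Hmain : inner (vadd (vadd y (vscale p (mu y))) s) (vadd (vadd y (vscale p (mu y))) s)
          <= r ^ 2 * (1 + (lm * q ^ 2 + 2 * lm * W ^ 2 + 2 * al))).
 { rewrite expand Hyy Hmm Halpha.
   assert (0 <= r ^ 2) by nra. assert (0 <= q ^ 2) by nra. assert (0 <= W ^ 2) by nra.
   fold Z in P1.
   assert (r ^ 2 * q ^ 2 * (G ^ 2 + 2 * T * (c + a) + G * Z) <= r ^ 2 * q ^ 2 * lm)
     by (apply Rmult_le_compat_l; [apply Rmult_le_pos; auto|lra]).
   assert (r ^ 2 * W ^ 2 * (Z ^ 2 + G * Z) <= r ^ 2 * W ^ 2 * (2 * lm))
     by (apply Rmult_le_compat_l; [apply Rmult_le_pos; auto|lra]).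
   nra. }
 set (E := lm * q ^ 2 + 2 * lm * W ^ 2 + 2 * al) in *.
 pose proof (exp_ineq1_le E).
 assert (Hmain2 : inner (vadd (vadd y (vscale p (mu y))) s) (vadd (vadd y (vscale p (mu y))) s)
          <= (r * exp (E / 2)) ^ 2).
 { replace ((r * exp (E / 2)) ^ 2) with (r ^ 2 * exp E).
   apply (Rle_trans _ _ _ Hmain). apply Rmult_le_compat_l; nra.
   replace E with (E / 2 + E / 2) at 1 by field. rewrite exp_plus. ring. }
 replace (lm / (2 * INR N) + lm * W ^ 2 + al) with (E / 2).
 apply vnorm_le_sq; auto. pose proof (exp_pos (E / 2)); nra.
 unfold E. rewrite Hq2. field. lra.
Qed.

End Step.


Lemma exp_mono x y : x <= y -> exp x <= exp y.
Proof. intros [H|H]; [left; apply exp_increasing; auto|rewrite H; lra]. Qed.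

Lemma foldr_Rmax_ge (f : nat -> R) l x0 u : u \in l -> f u <= foldr Rmax x0 (map f l).
Proof. elim: l => [|a l IH] //=. rewrite in_cons => /orP [/eqP ->|H].
 apply Rmax_l. apply (Rle_trans _ _ _ (IH H)). apply Rmax_r. Qed.
Lemma foldr_Rmax_x0 (f : nat -> R) l x0 : x0 <= foldr Rmax x0 (map f l).
Proof. elim: l => [|a l IH] /=; [lra|]. apply (Rle_trans _ _ _ IH). apply Rmax_r. Qed.
Lemma foldr_Rmax_att (f : nat -> R) l x0 :
  foldr Rmax x0 (map f l) = x0 \/ exists u, u \in l /\ foldr Rmax x0 (map f l) = f u.
Proof. elim: l => [|a l IH] /=; [by left|].
 destruct (Rle_dec (f a) (foldr Rmax x0 (map f l))) as [H|H].
 rewrite Rmax_right //. destruct IH as [E|[u [Hu E]]]; [by left|].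
 right; exists u; split; [rewrite in_cons Hu orbT //|exact E].
 rewrite Rmax_left; [|lra]. right; exists a; split; [rewrite in_cons eqxx //|reflexivity]. Qed.

Lemma max_upto_ge f n u : (u <= n)%N -> f u <= max_upto f n.
Proof. intro H. apply foldr_Rmax_ge. rewrite mem_iota add0n ltnS H //. Qed.
Lemma max_upto_att f n : exists u, (u <= n)%N /\ max_upto f n = f u.
Proof. destruct (foldr_Rmax_att f (iota 0 n.+1) (f 0%N)) as [E|[u [Hu E]]].
 exists 0%N; split; auto. exists u; split; auto. move: Hu; rewrite mem_iota add0n ltnS //. Qed.

Lemma foldr_Rplus_shift l x : foldr Rplus x l = foldr Rplus 0 l + x.
Proof. elim: l => [|a l IH] /=; [lra|rewrite IH; ring]. Qed.
Lemma sum_nn g n : sum_from_to g n n = 0.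
Proof. unfold sum_from_to. rewrite subnn //. Qed.
Lemma sum_S g u n : (u <= n)%N -> sum_from_to g u n.+1 = sum_from_to g u n + g n.
Proof. intro H. unfold sum_from_to. rewrite subSn // -addn1 iotaD map_cat foldr_cat subnKC //=.
 rewrite foldr_Rplus_shift. ring. Qed.

Unset Implicit Arguments.
Theorem lemma3p1 (d m : nat) (T c : R) (mu : Vec d -> Vec d) (sigma : Vec d -> Mat d m)
  (Omega : Type) (W : R -> Omega -> Vec m) (xi : Omega -> Vec d) :
  (0 < d)%N -> (0 < m)%N -> 0 < T -> 0 < c ->
  (exists Dmu : Vec d -> Mat d d, C1_with_deriv mu Dmu /\
     forall x, opnorm (Dmu x) <= c * (1 + rpow (vnorm x) c)) ->
  (forall x y, opnorm (msub (sigma x) (sigma y)) <= c * vnorm (vsub x y)) ->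
  (forall x y, inner (vsub x y) (vsub (mu x) (mu y)) <= c * vnorm (vsub x y) ^ 2) ->
  forall (N n : nat), (0 < N)%N -> (n <= N)%N ->
  forall omega : Omega,
    indicator (OmegaN mu sigma c T N (xi omega) (dW W T N omega) n)
      * vnorm (tamedY mu sigma T N (xi omega) (dW W T N omega) n)
    <= DN mu sigma c T N (xi omega) (dW W T N omega) n.
Proof.
 intros Hd Hm HT Hc [Dmu [HC1 HD]] Hsig Hone N n HN HnN omega.
 pose proof (mu_bound HC1 Hc HD) as HmuB.
 set (x0 := xi omega). set (w := dW W T N omega).
 set (Y := tamedY mu sigma T N x0 w).
 set (lm := lam mu sigma c T).
 set (Af := fun k => lm * vnorm (w k) ^ 2 + alphaN sigma (Y k) (w k)).
 set (Mx := fun n => max_upto (fun u => sum_from_to Af u n) n).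
 assert (HDN : forall n, DN mu sigma c T N x0 w n = (lm + vnorm x0) * exp (lm + Mx n)) by reflexivity.
 assert (Hlm : 0 <= lm).
 { unfold lm, lam. apply pow_le. pose proof (vnorm_nonneg (mu (@vzero d))).
   pose proof (opnorm_nonneg (sigma (@vzero d))). lra. }
 pose proof (vnorm_nonneg x0) as Hx0.
 pose proof (INR_N_ge1 HN) as HN1.
 assert (HMx0 : forall n, 0 <= Mx n).
 { intro k. unfold Mx. rewrite -(sum_nn Af k). apply (max_upto_ge (fun u => sum_from_to Af u k)). apply leqnn. }
 assert (Claim : forall n, (n <= N)%N -> OmegaN mu sigma c T N x0 w n ->
           vnorm (Y n) <= (lm + vnorm x0) * exp (lm * INR n / (2 * INR N) + Mx n)).
 { elim => [|k IH] HkN HO.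
   - pose proof (HMx0 0%N). replace (lm * INR 0 / (2 * INR N) + Mx 0%N) with (0 + Mx 0%N) by (simpl; field; lra).
     pose proof (exp_ineq1_le (0 + Mx 0%N)). change (Y 0%N) with x0.
     assert (0 <= (lm + vnorm x0) * (exp (0 + Mx 0%N) - 1)) by (apply Rmult_le_pos; lra). lra.
   - assert (HkN' : (k <= N)%N) by (apply ltnW; exact HkN).
     assert (HOk : OmegaN mu sigma c T N x0 w k).
     { destruct HO as [HO1 HO2]. split; intros j Hj; [apply HO1|apply HO2]; apply (ltn_trans Hj); apply ltnSn. }
     specialize (IH HkN' HOk).
     destruct HO as [HO1 HO2].
     pose proof (HO1 k (ltnSn k)) as HDk. pose proof (HO2 k (ltnSn k)) as Hwk.
     rewrite HDN in HDk.
     assert (Hk2 : lm * INR k / (2 * INR N) <= lm).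
     { assert (INR k <= INR N) by (apply le_INR; apply/leP; exact HkN').
       apply (Rmult_le_reg_r (2 * INR N)); [lra|]. field_simplify; [|lra]. nra. }
     assert (HYk : vnorm (Y k) <= rpow (INR N) (/ (2 * c))).
     { apply (Rle_trans _ _ _ IH). apply (Rle_trans _ ((lm + vnorm x0) * exp (lm + Mx k))); [|exact HDk].
       apply Rmult_le_compat_l; [lra|]. apply exp_mono. lra. }
     change (Y k.+1) with (step mu sigma T N (Y k) (w k)).
     assert (HS1 : INR k.+1 = INR k + 1) by apply S_INR.
     destruct (Rlt_dec (vnorm (Y k)) 1) as [Hsm|Hlg].
     + pose proof (step_small HT Hc HN HmuB Hsig Hsm Hwk) as H1. fold lm in H1.
       pose proof (HMx0 k.+1). assert (0 <= lm * INR k.+1 / (2 * INR N)).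
       { apply Rmult_le_pos; [apply Rmult_le_pos; [auto|apply pos_INR]|]. apply Rlt_le, Rinv_0_lt_compat; lra. }
       pose proof (exp_ineq1_le (lm * INR k.+1 / (2 * INR N) + Mx k.+1)). nra.
     + assert (Hge : 1 <= vnorm (Y k)) by lra.
       assert (Hrp : rpow (vnorm (Y k)) c <= sqrt (INR N)).
       { rewrite -(rpow_root (N:=INR N) (c:=c)); [|lra|auto]. apply rpow_mono; [|lra].
         split; [apply vnorm_nonneg|auto]. }
       pose proof (step_large HT Hc HN HmuB Hsig Hone (w k) Hge Hrp) as H1. fold lm in H1.
       destruct (max_upto_att (fun u => sum_from_to Af u k) k) as [u [Hu Eu]].
       assert (HMk : Mx k + Af k <= Mx k.+1).
       { unfold Mx. rewrite Eu -(@sum_S Af u k Hu). apply (max_upto_ge (fun v => sum_from_to Af v k.+1)). apply (leq_trans Hu). apply leqnSn. }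
       apply (Rle_trans _ _ _ H1).
       apply (Rle_trans _ ((lm + vnorm x0) * exp (lm * INR k / (2 * INR N) + Mx k) * exp (lm / (2 * INR N) + lm * vnorm (w k) ^ 2 + alphaN sigma (Y k) (w k)))).
       * apply Rmult_le_compat_r; [left; apply exp_pos|exact IH].
       * rewrite Rmult_assoc -exp_plus. apply Rmult_le_compat_l; [lra|]. apply exp_mono.
         rewrite HS1. unfold Af in HMk |- *.
         replace (lm * (INR k + 1) / (2 * INR N)) with (lm * INR k / (2 * INR N) + lm / (2 * INR N)) by (field; lra).
         lra. }
 unfold indicator. destruct (excluded_middle_informative _) as [HO|HO].
 - rewrite Rmult_1_l. fold x0 w Y. rewrite HDN. apply (Rle_trans _ _ _ (Claim n HnN HO)).
   apply Rmult_le_compat_l; [lra|]. apply exp_mono.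
   assert (INR n <= INR N) by (apply le_INR; apply/leP; exact HnN).
   assert (lm * INR n / (2 * INR N) <= lm); [|lra].
   apply (Rmult_le_reg_r (2 * INR N)); [lra|]. field_simplify; [|lra]. nra.
 - rewrite Rmult_0_l. fold x0 w. rewrite HDN. apply Rmult_le_pos; [lra|left; apply exp_pos].
Qed.
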